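(* Let $p\ge 2$ and let $T$ be a tetrahedron obtained as the image of the reference tetrahedron under a non-degenerate map. Then the collection of matrix-valued functions on $T$ consisting of a basis of $[\mathcal{N}_{II}^1(T)]^3=[\mathit{P}^1(T)]^{3\times3}$ together with all of the following functions is linearly independent: (i) (edge functions) for each edge $j\in\mathcal{J}$ and each $\varphi$ in a basis of $\mathcal{E}^p_j(T)$: $\varphi\,\mathbf{d}_1\otimes\mathbf{t}$ and $\varphi\,\mathbf{d}_2\otimes\mathbf{t}$, with $\mathbf{t},\mathbf{d}_1,\mathbf{d}_2$ the vectors of edge $j$; (ii) (edge-face functions) for each face $k\in\mathcal{K}$ with normal $\mathbf{n}$, each edge $j\in\mathcal{J}_k$ and each $\varphi$ in a basis of $\mathcal{E}^p_j(T)$: $\varphi\,\mathbf{t}\otimes\mathbf{k}$, $\varphi\,\mathbf{m}\otimes\mathbf{k}$, $\varphi\,\mathbf{n}\otimes\mathbf{k}$, where $\mathbf{t}$ is the tangent of edge $j$, $\mathbf{k}$ is the edge-face vector of edge $j$ with $\mathbf{n}\times\mathbf{k}\neq0$, and $\mathbf{m}=\mathbf{Q}\mathbf{k}$ with $\mathbf{Q}=\|\mathbf{n}\|^2\mathbb{1}-\mathbf{n}\otimes\mathbf{n}$; (iii) (face functions) for each face $k\in\mathcal{K}$ with normal $\mathbf{n}$ and each $\varphi$ in a basis of $\mathcal{F}^p_k(T)$, with $j=\min\mathcal{J}_k$, $\mathbf{t}$ the tangent of edge $j$ and $\mathbf{m}=\mathbf{Q}\mathbf{k}$ as in (ii) for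 this edge $j$: $\varphi\,\mathbf{t}\otimes\mathbf{m}$, $\varphi\,\mathbf{m}\otimes\mathbf{t}$, $\varphi(\mathbf{t}\otimes\mathbf{t}-\mathbf{m}\otimes\mathbf{m})$, $\varphi\,\mathbf{n}\otimes\mathbf{t}$, $\varphi\,\mathbf{n}\otimes\mathbf{m}$; (iv) (cell functions) $\varphi\,\mathbb{1}$ for $\varphi$ in a basis of $\bigoplus_{j\in\mathcal{J}}\mathcal{E}^{p+1}_j(T)\oplus\bigoplus_{k\in\mathcal{K}}\mathcal{F}^{p+1}_k(T)\oplus\mathcal{C}^{p+1}(T)$; for each face $k$ and $\varphi$ in a basis of $\mathcal{F}^p_k(T)$, with $\mathbf{t},\mathbf{m},\mathbf{n}$ as in (iii): $\varphi\,\mathbf{t}\otimes\mathbf{n}$, $\varphi\,\mathbf{m}\otimes\mathbf{n}$, $\varphi\,\mathbf{n}\otimes\mathbf{n}$; and $\varphi\,\mathbf{T}$ for $\varphi$ in a basis of $\mathcal{C}^p(T)$ and $\mathbf{T}$ in a basis of $\mathfrak{sl}(3)$ (trace-free $3\times3$ matrices).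
   Context: Reference tetrahedron $\Omega=\{(\xi,\eta,\zeta)\in[0,1]^3:\xi+\eta+\zeta\le1\}$ with barycentric coordinates $\lambda_1=1-\xi-\eta-\zeta$, $\lambda_2=\zeta$, $\lambda_3=\eta$, $\lambda_4=\xi$ (vertex $v_i$ is where $\lambda_i=1$). The physical element is $T=\mathbf{x}(\Omega)$ with $\mathbf{J}=\mathrm{D}\mathbf{x}$ invertible. Edges are indexed by $\mathcal{J}=\{(1,2),(1,3),(1,4),(2,3),(2,4),(3,4)\}$, faces by $\mathcal{K}=\{(1,2,3),(1,2,4),(1,3,4),(2,3,4)\}$; $\mathcal{J}_k$ is the set of the three edges of face $k$ and $\min\mathcal{J}_k$ its lexicographically smallest element. Scalar polytopal spaces: for each degree $q\ge1$ a basis of $\mathit{P}^q(T)$ is split into vertex functions ($\lambda_1,\dots,\lambda_4$), edge spaces $\mathcal{E}^q_j(T)$ of dimension $q-1$ (functions of degree $2,\dots,q$ associated to edge $j$, vanishing on all other edges), face spaces $\mathcal{F}^q_k(T)$ of dimension $(q-2)(q-1)/2$ (vanishing on all other faces), and a cell space $\mathcal{C}^q(T)$ of dimension $(q-3)(q-2)(q-1)/6$ (vanishing on $\partial T$); the union of these bases is a basis of $\mathit{P}^q(T)$. Edge tangents: reference templates $\boldsymbol{\tau}_{12}=\mathbf{e}_3$, $\boldsymbol{\tau}_{13}=\mathbf{e}_2$, $\boldsymbol{\tau}_{14}=\mathbf{e}_1$, $\boldsymbol{\tau}_{23}=\mathbf{e}_2-\mathbf{e}_3$, $\boldsymbol{\tau}_{24}=\mathbf{e}_1-\mathbf{e}_3$,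 $\boldsymbol{\tau}_{34}=\mathbf{e}_1-\mathbf{e}_2$, mapped by $\mathbf{t}=\mathbf{J}\boldsymbol{\tau}$. Edge-face vectors: reference pairs $(1,2):\{-\mathbf{e}_2,-\mathbf{e}_1\}$, $(1,3):\{\mathbf{e}_3,-\mathbf{e}_1\}$, $(1,4):\{\mathbf{e}_3,\mathbf{e}_2\}$, $(2,3):\{\mathbf{e}_1+\mathbf{e}_2+\mathbf{e}_3,-\mathbf{e}_1\}$, $(2,4):\{\mathbf{e}_1+\mathbf{e}_2+\mathbf{e}_3,\mathbf{e}_2\}$, $(3,4):\{\mathbf{e}_1+\mathbf{e}_2+\mathbf{e}_3,-\mathbf{e}_3\}$, mapped by $\mathbf{k}=\mathbf{J}^{-T}\boldsymbol{\kappa}$. Face normals: reference $\boldsymbol{\nu}_{123}=-\mathbf{e}_1$, $\boldsymbol{\nu}_{124}=\mathbf{e}_2$, $\boldsymbol{\nu}_{134}=-\mathbf{e}_3$, $\boldsymbol{\nu}_{234}=-\mathbf{e}_1-\mathbf{e}_2-\mathbf{e}_3$, mapped by $\mathbf{n}=(\det\mathbf{J})\mathbf{J}^{-T}\boldsymbol{\nu}$. For an edge with tangent $\mathbf{t}=(t_1,t_2,t_3)$, $\mathbf{d}_2=\big(\operatorname{sgn}_*(t_1)|t_3|,\ \operatorname{sgn}_*(t_2)|t_3|,\ -\operatorname{sgn}_*(t_3)|t_1|-\operatorname{sgn}_*(t_3)|t_2|\big)^T$ where $\operatorname{sgn}_*(x)=1$ for $x\ge0$ and $-1$ for $x<0$,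 and $\mathbf{d}_1=\mathbf{d}_2\times\mathbf{t}$. $\mathbb{1}$ is the identity matrix. $[\mathcal{N}_{II}^1(T)]^3$ is the space of $3\times3$ matrix fields with all rows in $[\mathit{P}^1(T)]^3$, i.e. $[\mathit{P}^1(T)]^{3\times3}$. *)

(* Defs.v *)
From HB Require Import structures.
From mathcomp Require Import all_boot all_order all_algebra.
Set Implicit Arguments. Unset Strict Implicit. Unset Printing Implicit Defensive.
Import Order.TTheory GRing.Theory Num.Theory.
Local Open Scope ring_scope.

Section Tet.
Variable R : realFieldType.

Definition vec := 'cV[R]_3.
Definition mat := 'M[R]_3.

Definition v3 (x y z : R) : vec :=
  \col_(i < 3) (match (i : nat) with 0 => x | 1 => y | _ => z end).
Definition e1 : vec := v3 1 0 0.
Definition e2 : vec := v3 0 1 0.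
Definition e3 : vec := v3 0 0 1.

Definition cross (u v : vec) : vec :=
  v3 (u 1 0 * v 2 0 - u 2 0 * v 1 0)
     (u 2 0 * v 0 0 - u 0 0 * v 2 0)
     (u 0 0 * v 1 0 - u 1 0 * v 0 0).
Definition normsq (v : vec) : R := \sum_(i < 3) v i 0 ^+ 2.
Definition tensor (u v : vec) : mat := u *m v^T.

Definition sgnst (x : R) : R := if 0 <= x then 1 else -1.

(* ---- combinatorics: vertices 'I_4 (index i stands for vertex i+1),
   edges 'I_6 in lexicographic order (1,2),(1,3),(1,4),(2,3),(2,4),(3,4),
   faces 'I_4 in order (1,2,3),(1,2,4),(1,3,4),(2,3,4). *)
Definition edge_v (j : 'I_6) : 'I_4 * 'I_4 :=
  match (j : nat) with
  | 0 => (inord 0, inord 1) | 1 => (inord 0, inord 2) | 2 => (inord 0, inord 3)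
  | 3 => (inord 1, inord 2) | 4 => (inord 1, inord 3) | _ => (inord 2, inord 3)
  end.
(* the vertex not in face k: (1,2,3)->4, (1,2,4)->3, (1,3,4)->2, (2,3,4)->1 *)
Definition opp_v (k : 'I_4) : 'I_4 := rev_ord k.
Definition edge_in_face (j : 'I_6) (k : 'I_4) : bool :=
  (opp_v k != (edge_v j).1) && (opp_v k != (edge_v j).2).
Definition minJ (k : 'I_4) : 'I_6 :=
  nth ord0 [seq j <- enum 'I_6 | edge_in_face j k] 0.

Definition tau (j : 'I_6) : vec :=
  match (j : nat) with
  | 0 => e3 | 1 => e2 | 2 => e1 | 3 => e2 - e3 | 4 => e1 - e3 | _ => e1 - e2
  end.
Definition kappa (j : 'I_6) : vec * vec :=
  match (j : nat) with
  | 0 => (- e2, - e1) | 1 => (e3, - e1) | 2 => (e3, e2)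
  | 3 => (e1 + e2 + e3, - e1) | 4 => (e1 + e2 + e3, e2)
  | _ => (e1 + e2 + e3, - e3)
  end.
Definition nu (k : 'I_4) : vec :=
  match (k : nat) with
  | 0 => - e1 | 1 => e2 | 2 => - e3 | _ => - e1 - e2 - e3
  end.

(* ---- mapped vectors for the affine map x(xi) = a + J xi *)
Definition JmT (J : mat) : mat := (invmx J)^T.
Definition tvec (J : mat) (j : 'I_6) : vec := J *m tau j.
Definition nvec (J : mat) (k : 'I_4) : vec := \det J *: (JmT J *m nu k).
Definition kvec (J : mat) (k : 'I_4) (j : 'I_6) : vec :=
  let k1 := JmT J *m (kappa j).1 in
  let k2 := JmT J *m (kappa j).2 in
  if cross (nvec J k) k1 != 0 then k1 else k2.
Definition Qmat (J : mat) (k : 'I_4) : mat :=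
  (normsq (nvec J k))%:M - tensor (nvec J k) (nvec J k).
Definition mvec (J : mat) (k : 'I_4) (j : 'I_6) : vec := Qmat J k *m kvec J k j.
Definition d2vec (t : vec) : vec :=
  v3 (sgnst (t 0 0) * `|t 2 0|) (sgnst (t 1 0) * `|t 2 0|)
     (- sgnst (t 2 0) * `|t 0 0| - sgnst (t 2 0) * `|t 1 0|).
Definition d1vec (t : vec) : vec := cross (d2vec t) t.

Definition inOmega (xi : vec) : Prop :=
  [/\ 0 <= xi 0 0, 0 <= xi 1 0, 0 <= xi 2 0 & xi 0 0 + xi 1 0 + xi 2 0 <= 1].
Definition inT (a : vec) (J : mat) (y : vec) : Prop :=
  exists2 xi, inOmega xi & y = a + J *m xi.
(* barycentric coordinates on T, lambda_i o x^{-1} *)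
Definition lam (a : vec) (J : mat) (i : 'I_4) (y : vec) : R :=
  let xi := invmx J *m (y - a) in
  match (i : nat) with
  | 0 => 1 - xi 0 0 - xi 1 0 - xi 2 0 | 1 => xi 2 0 | 2 => xi 1 0 | _ => xi 0 0
  end.
Definition on_edge a J (j : 'I_6) (y : vec) : Prop :=
  inT a J y /\ forall l : 'I_4, l != (edge_v j).1 -> l != (edge_v j).2 -> lam a J l y = 0.
Definition on_face a J (k : 'I_4) (y : vec) : Prop :=
  inT a J y /\ lam a J (opp_v k) y = 0.
Definition on_boundary a J (y : vec) : Prop := exists k, on_face a J k y.

Definition polyfun (q : nat) (f : vec -> R) : Prop :=
  exists c : {ffun 'I_3 -> 'I_q.+1} -> R, forall y,
    f y = \sum_(al : {ffun 'I_3 -> 'I_q.+1} | (\sum_(i < 3) (al i : nat) <= q)%N)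
            c al * \prod_(i < 3) y i 0 ^+ al i.

Definition sindep_on (S : vec -> Prop) (I : finType) (f : I -> vec -> R) : Prop :=
  forall c : I -> R, (forall y, S y -> \sum_i c i * f i y = 0) -> forall i, c i = 0.
Definition mindep_on (S : vec -> Prop) (I : finType) (f : I -> vec -> mat) : Prop :=
  forall c : I -> R, (forall y, S y -> \sum_i c i *: f i y = 0) -> forall i, c i = 0.

Definition sbasis_on (S : vec -> Prop) (q : nat) (I : finType) (f : I -> vec -> R) :=
  [/\ forall i, polyfun q (f i), sindep_on S f &
      forall g, polyfun q g -> exists c : I -> R, forall y, S y -> g y = \sum_i c i * f i y].

Definition dimF (q : nat) : nat := ((q - 2) * (q - 1)) %/ 2.
Definition dimC (q : nat) : nat := ((q - 3) * (q - 2) * (q - 1)) %/ 6.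

Definition allIdx (q : nat) : finType :=
  ('I_4 + ('I_6 * 'I_q.-1) + ('I_4 * 'I_(dimF q)) + 'I_(dimC q))%type.

Definition allbasis a J
  (E : forall q, 'I_6 -> 'I_q.-1 -> vec -> R)
  (F : forall q, 'I_4 -> 'I_(dimF q) -> vec -> R)
  (C : forall q, 'I_(dimC q) -> vec -> R) (q : nat) (x : allIdx q) : vec -> R :=
  match x with
  | inl (inl (inl i)) => lam a J i
  | inl (inl (inr (j, i))) => E q j i
  | inl (inr (k, i)) => F q k i
  | inr i => C q i
  end.

Arguments allbasis : clear implicits.

Definition polytopal_spaces a J
  (E : forall q, 'I_6 -> 'I_q.-1 -> vec -> R)
  (F : forall q, 'I_4 -> 'I_(dimF q) -> vec -> R)
  (C : forall q, 'I_(dimC q) -> vec -> R) : Prop :=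
  forall q : nat, (1 <= q)%N ->
  [/\ forall j i j' y, j' != j -> on_edge a J j' y -> E q j i y = 0,
      forall k i k' y, k' != k -> on_face a J k' y -> F q k i y = 0,
      forall i y, on_boundary a J y -> C q i y = 0 &
      sbasis_on (inT a J) q (allbasis a J E F C q)].

Definition P1mat_basis a J (B : 'I_36 -> vec -> mat) : Prop :=
  [/\ forall i r s, polyfun 1 (fun y => B i y r s), mindep_on (inT a J) B &
      forall G : vec -> mat, (forall r s, polyfun 1 (fun y => G y r s)) ->
        exists c : 'I_36 -> R, forall y, inT a J y -> G y = \sum_i c i *: B i y].

Definition sl3_basis (S : 'I_8 -> mat) : Prop :=
  [/\ forall i, \tr (S i) = 0,
      forall c : 'I_8 -> R, \sum_i c i *: S i = 0 -> forall i, c i = 0 &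
      forall M : mat, \tr M = 0 -> exists c : 'I_8 -> R, M = \sum_i c i *: S i].

Definition EFidx : finType := {kj : 'I_4 * 'I_6 | edge_in_face kj.2 kj.1}.

Definition Idx (p : nat) : finType :=
  ('I_36
   + ('I_6 * 'I_p.-1 * bool)
   + (EFidx * 'I_p.-1 * 'I_3)
   + ('I_4 * 'I_(dimF p) * 'I_5)
   + ('I_6 * 'I_p + 'I_4 * 'I_(dimF p.+1) + 'I_(dimC p.+1))
   + ('I_4 * 'I_(dimF p) * 'I_3)
   + ('I_(dimC p) * 'I_8))%type.

Definition fam (a : vec) J (B : 'I_36 -> vec -> mat) (S : 'I_8 -> mat)
  (E : forall q, 'I_6 -> 'I_q.-1 -> vec -> R)
  (F : forall q, 'I_4 -> 'I_(dimF q) -> vec -> R)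
  (C : forall q, 'I_(dimC q) -> vec -> R) (p : nat) (x : Idx p) (y : vec) : mat :=
  match x with
  | inl (inl (inl (inl (inl (inl i))))) => B i y
  | inl (inl (inl (inl (inl (inr (j, i, b)))))) =>
      let t := tvec J j in
      E p j i y *: tensor (if b then d1vec t else d2vec t) t
  | inl (inl (inl (inl (inr (kj, i, r))))) =>
      let k := (val kj).1 in let j := (val kj).2 in
      let t := tvec J j in let kk := kvec J k j in
      let m := mvec J k j in let n := nvec J k in
      E p j i y *: (match (r : nat) with
                    | 0 => tensor t kk | 1 => tensor m kk | _ => tensor n kk end)
  | inl (inl (inl (inr (k, i, r)))) =>
      let j := minJ k in
      let t := tvec J j in let m := mvec J k j in let n := nvec J k in
      F p k i y *: (match (r : nat) with
                    | 0 => tensor t m | 1 => tensor m t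
                    | 2 => tensor t t - tensor m m
                    | 3 => tensor n t | _ => tensor n m end)
  | inl (inl (inr (inl (inl (j, i))))) => E p.+1 j i y *: 1%:M
  | inl (inl (inr (inl (inr (k, i))))) => F p.+1 k i y *: 1%:M
  | inl (inl (inr (inr i))) => C p.+1 i y *: 1%:M
  | inl (inr (k, i, r)) =>
      let j := minJ k in
      let t := tvec J j in let m := mvec J k j in let n := nvec J k in
      F p k i y *: (match (r : nat) with
                    | 0 => tensor t n | 1 => tensor m n | _ => tensor n n end)
  | inr (i, s) => C p i y *: S s
  end.

End Tet.
Arguments allbasis : clear implicits.
Arguments fam : clear implicits.

(* Main.v *)
Require Import Defs.
From HB Require Import structures.
From mathcomp Require Import all_boot all_order all_algebra.
From mathcomp Require Import ring lra.
Import Order.TTheory GRing.Theory Num.Theory.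
Local Open Scope ring_scope.
Set Implicit Arguments. Unset Strict Implicit.

Section Vec.
Variable R : realFieldType.
Implicit Types u v w : vec R.

Lemma sum3 (V : nmodType) (f : 'I_3 -> V) : \sum_i f i = f 0 + f 1 + f 2.
Proof. by rewrite !big_ord_recr big_ord0 /= add0r; congr (f _ + f _ + f _); apply: val_inj. Qed.

Lemma ord3 (i : 'I_3) : i = 0 \/ i = 1 \/ i = 2.
Proof. by case: i => -[|[|[|//]]] Hi; [left|right;left|right;right]; apply: val_inj. Qed.

Definition dot u v : R := \sum_i u i 0 * v i 0.

Lemma vecP3 u v : u 0 0 = v 0 0 -> u 1 0 = v 1 0 -> u 2 0 = v 2 0 -> u = v.
Proof.
move=> h0 h1 h2; apply/matrixP => i j; rewrite [j]ord1.
by case: (ord3 i) => [->|[->|->]].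
Qed.

Lemma v3E0 x y z : v3 x y z 0 0 = x :> R. Proof. by rewrite mxE. Qed.
Lemma v3E1 x y z : v3 x y z 1 0 = y :> R. Proof. by rewrite mxE. Qed.
Lemma v3E2 x y z : v3 x y z 2 0 = z :> R. Proof. by rewrite mxE. Qed.

Lemma mulmxE3 (M : 'M[R]_3) u i : (M *m u) i 0 = M i 0 * u 0 0 + M i 1 * u 1 0 + M i 2 * u 2 0.
Proof. by rewrite mxE sum3. Qed.

Lemma crossE u v : [/\ cross u v 0 0 = u 1 0 * v 2 0 - u 2 0 * v 1 0,
  cross u v 1 0 = u 2 0 * v 0 0 - u 0 0 * v 2 0 &
  cross u v 2 0 = u 0 0 * v 1 0 - u 1 0 * v 0 0].
Proof. by rewrite /cross !mxE. Qed.

Definition triple u v w := dot (cross u v) w.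

Lemma tripleE u v w : triple u v w =
  (u 1 0 * v 2 0 - u 2 0 * v 1 0) * w 0 0 + (u 2 0 * v 0 0 - u 0 0 * v 2 0) * w 1 0
  + (u 0 0 * v 1 0 - u 1 0 * v 0 0) * w 2 0.
Proof. by rewrite /triple /dot sum3; case: (crossE u v) => -> -> ->. Qed.

Lemma triple_mul (M : 'M[R]_3) u v w :
  triple (M *m u) (M *m v) (M *m w) = triple (M *m e1 R) (M *m e2 R) (M *m e3 R) * triple u v w.
Proof.
rewrite !tripleE !mulmxE3 /e1 /e2 /e3 !mxE /=.
ring.
Qed.


Lemma v3_eq0 x y z : (v3 x y z == 0 :> vec R) = [&& x == 0, y == 0 & z == 0].
Proof.
apply/eqP/and3P => [h|[/eqP hx /eqP hy /eqP hz]].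
  by split; apply/eqP; [rewrite -(v3E0 x y z) | rewrite -(v3E1 x y z) | rewrite -(v3E2 x y z)]; rewrite h mxE.
by apply: vecP3; rewrite !mxE.
Qed.

Definition bad (k : 'I_4) (j : 'I_6) : bool :=
  ((k : nat), (j : nat)) \in [:: (1,0); (2,1); (2,2); (3,3); (3,4); (3,5)]%N.

Definition ksel (k : 'I_4) (j : 'I_6) : vec R :=
  if bad k j then (kappa R j).2 else (kappa R j).1.

Ltac nsimp := rewrite ?(mul0r, mulr0, mul1r, mulr1, mulN1r, mulrN1, subr0, sub0r, add0r, addr0,
   opprK, oppr0, eqxx, oppr_eq0, oner_eq0, addNr, addrN, subrr) /=.

Lemma kselP (k : 'I_4) (j : 'I_6) : edge_in_face j k ->
  (cross (nu R k) (kappa R j).1 == 0) = bad k j.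
Proof.
rewrite /cross v3_eq0 /bad.
case: k => -[|[|[|[|//]]]] Hk; case: j => -[|[|[|[|[|[|//]]]]]] Hj;
 rewrite /edge_in_face /opp_v /edge_v /= -!val_eqE /= !inordK //= => _.
all: by rewrite /e1 /e2 /e3 !mxE /=; nsimp.
Qed.

Ltac efcase k j := case: k => -[|[|[|[|//]]]] ?; case: j => -[|[|[|[|[|[|//]]]]]] ?;
 rewrite /edge_in_face /opp_v /edge_v /= -!val_eqE /= !inordK //=.

Lemma tau_kappa (j : 'I_6) : dot (tau R j) (kappa R j).1 = 0 /\ dot (tau R j) (kappa R j).2 = 0.
Proof.
rewrite /dot !sum3.
by case: j => -[|[|[|[|[|[|//]]]]]] ?; rewrite /e1 /e2 /e3 /= !mxE /=; nsimp.
Qed.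

Lemma tau_ksel k j : dot (tau R j) (ksel k j) = 0.
Proof. by rewrite /ksel; case: ifP => _; case: (tau_kappa j). Qed.

Lemma nu_tau k j : edge_in_face j k -> dot (nu R k) (tau R j) = 0.
Proof. rewrite /dot sum3; efcase k j => _; by rewrite /e1 /e2 /e3 !mxE /=; nsimp. Qed.

Lemma tau_neq0 j : tau R j != 0.
Proof.
apply/negP => /eqP h.
have h0 := congr1 (fun x : vec R => (x 0 0, x 1 0, x 2 0)) h; move: h0 => /=.
by case: j h => -[|[|[|[|[|[|//]]]]]] ? _; rewrite /e1 /e2 /e3 /= !mxE /=; nsimp; case=> *; lra.
Qed.

Lemma cross_ksel k j : edge_in_face j k -> cross (nu R k) (ksel k j) != 0.
Proof.
move=> hkj; rewrite /ksel; case: ifP => hb; last by rewrite kselP // hb.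
move: hkj hb; rewrite /cross v3_eq0 /bad.
by efcase k j => _; rewrite /e1 /e2 /e3 !mxE /=; nsimp.
Qed.

Definition omega (k : 'I_4) (j : 'I_6) : vec R :=
  match (k : nat), (j : nat) with
  | 0, 0 => e2 R | 1, 0 => e1 R | 0, 1 => e3 R | 2, 1 => e1 R
  | 1, 2 => e3 R | 2, 2 => e2 R | 0, 3 => e2 R | 3, 3 => v3 1 (-1) 0
  | 1, 4 => e1 R | 3, 4 => v3 1 (-1) 0 | 2, 5 => e1 R | _, _ => v3 1 0 (-1)
  end%N.

Lemma omegaP k0 j : edge_in_face j k0 ->
  dot (ksel k0 j) (omega k0 j) != 0 /\
  forall k', edge_in_face j k' -> k' != k0 -> dot (ksel k' j) (omega k0 j) = 0.
Proof.
rewrite /dot /ksel /bad !sum3 => h; split.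
  move: h; efcase k0 j => _; by rewrite /e1 /e2 /e3 !mxE /=; nsimp.
move=> k'; rewrite sum3; move: h.
efcase k0 j => _; case: k' => -[|[|[|[|//]]]] ?;
  rewrite /edge_in_face /opp_v /edge_v /= -?val_eqE /= ?inordK //= => _ _;
  by rewrite /omega /e1 /e2 /e3 !mxE /=; nsimp.
Qed.


Lemma dotC u v : dot u v = dot v u.
Proof. by rewrite /dot !sum3; ring. Qed.
Lemma dotDr u v w : dot u (v + w) = dot u v + dot u w.
Proof. by rewrite /dot !sum3 !mxE; ring. Qed.
Lemma dotBr u v w : dot u (v - w) = dot u v - dot u w.
Proof. by rewrite /dot !sum3 !mxE; ring. Qed.
Lemma dotZr u v (s : R) : dot u (s *: v) = s * dot u v.
Proof. by rewrite /dot !sum3 !mxE; ring. Qed.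
Lemma dotDl u v w : dot (v + w) u = dot v u + dot w u.
Proof. by rewrite dotC dotDr !(dotC u). Qed.
Lemma dotBl u v w : dot (v - w) u = dot v u - dot w u.
Proof. by rewrite dotC dotBr !(dotC u). Qed.
Lemma dotZl u v (s : R) : dot (s *: v) u = s * dot v u.
Proof. by rewrite dotC dotZr dotC. Qed.
Lemma dot0r u : dot u 0 = 0.
Proof. by rewrite /dot big1 // => i _; rewrite mxE mulr0. Qed.

Lemma dot0l u : dot 0 u = 0.
Proof. by rewrite dotC dot0r. Qed.

Lemma dot_ge0 u : 0 <= dot u u.
Proof. by rewrite /dot sumr_ge0 // => i _; rewrite -expr2 sqr_ge0. Qed.

Lemma dot_eq0 u : dot u u = 0 -> u = 0.
Proof.
rewrite /dot sum3 => h.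
have h0 : u 0 0 = 0 by nra.
have h1 : u 1 0 = 0 by nra.
have h2 : u 2 0 = 0 by nra.
by apply: vecP3; rewrite !mxE.
Qed.

Lemma dot_neq0 u : u != 0 -> dot u u != 0.
Proof. by move=> h; apply/eqP => /dot_eq0 /eqP; apply/negP. Qed.

Lemma dot_gt0 u : u != 0 -> 0 < dot u u.
Proof. by move=> h; rewrite lt0r dot_neq0 ?dot_ge0. Qed.

Lemma tensor_mul u w x : tensor u w *m x = dot w x *: u.
Proof.
rewrite /tensor -mulmxA; apply/matrixP => i j; rewrite [j]ord1 !mxE big_ord1 !mxE mulrC.
by congr (_ * _); apply: eq_bigr => k _; rewrite !mxE.
Qed.

Lemma dot_cross_l u v : dot (cross u v) u = 0.
Proof. by rewrite /dot sum3; case: (crossE u v) => -> -> ->; ring. Qed.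
Lemma dot_cross_r u v : dot (cross u v) v = 0.
Proof. by rewrite /dot sum3; case: (crossE u v) => -> -> ->; ring. Qed.

Lemma lagrange u v : dot (cross u v) (cross u v) = dot u u * dot v v - dot u v ^+ 2.
Proof. by rewrite /dot !sum3; case: (crossE u v) => -> -> ->; ring. Qed.

Lemma crossZl (s : R) u v : cross (s *: u) v = s *: cross u v.
Proof. by apply: vecP3; rewrite /cross !mxE /=; ring. Qed.

Lemma cross_comb u x (a b : R) : cross u (a *: x - b *: u) = a *: cross u x.
Proof. by apply: vecP3; rewrite /cross !mxE /=; ring. Qed.

Lemma dotE u v : dot u v = (u^T *m v) 0 0.
Proof. by rewrite /dot mxE; apply: eq_bigr => i _; rewrite mxE. Qed.

Lemma dot_e1 u : dot u (e1 R) = u 0 0.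
Proof. by rewrite /dot sum3 /e1 /e2 /e3 !mxE /=; ring. Qed.
Lemma dot_e2 u : dot u (e2 R) = u 1 0.
Proof. by rewrite /dot sum3 /e1 /e2 /e3 !mxE /=; ring. Qed.
Lemma dot_e3 u : dot u (e3 R) = u 2 0.
Proof. by rewrite /dot sum3 /e1 /e2 /e3 !mxE /=; ring. Qed.

Lemma triple_e : triple (e1 R) (e2 R) (e3 R) = 1.
Proof. by rewrite tripleE /e1 /e2 /e3 !mxE /=; ring. Qed.

Lemma triple0 u v : (forall w, triple u v w = 0) -> cross u v = 0.
Proof.
move=> h; apply: vecP3; rewrite [RHS]mxE.
- by rewrite -(dot_e1 (cross u v)); apply: h.
- by rewrite -(dot_e2 (cross u v)); apply: h.
- by rewrite -(dot_e3 (cross u v)); apply: h.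
Qed.

Lemma triple_unit (M : 'M[R]_3) : M \in unitmx ->
  triple (M *m e1 R) (M *m e2 R) (M *m e3 R) != 0.
Proof.
move=> hM; apply/eqP => h.
have := triple_mul M (invmx M *m e1 R) (invmx M *m e2 R) (invmx M *m e3 R).
by rewrite !mulmxA mulmxV // !mul1mx triple_e h mul0r; apply/eqP; rewrite oner_eq0.
Qed.

Lemma cross_unit (M : 'M[R]_3) u v : M \in unitmx ->
  (cross (M *m u) (M *m v) == 0) = (cross u v == 0).
Proof.
move=> hM; apply/eqP/eqP => h.
  apply: triple0 => w; apply/eqP; rewrite -(mulrI_eq0 _ (lregP (triple_unit hM))).
  by rewrite -triple_mul /triple h dot0l.
apply: triple0 => w; have := triple_mul M u v (invmx M *m w).
rewrite mulmxA mulmxV // mul1mx => ->.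
by rewrite /triple h dot0l mulr0.
Qed.


Lemma sgnst_mul (x : R) : sgnst x * x = `|x|.
Proof.
rewrite /sgnst; case: ifP => h; first by rewrite mul1r ger0_norm.
by rewrite mulN1r ltr0_norm // ltNge h.
Qed.

Lemma sgnst_neq0 (x : R) : sgnst x != 0.
Proof. by rewrite /sgnst; case: ifP => _; rewrite ?oppr_eq0 oner_eq0. Qed.

Lemma d2_t (t : vec R) : dot (d2vec t) t = 0.
Proof.
rewrite /dot sum3 /d2vec !mxE /=.
transitivity (`|t 2 0| * (sgnst (t 0 0) * t 0 0) + `|t 2 0| * (sgnst (t 1 0) * t 1 0)
   - (sgnst (t 2 0) * t 2 0) * (`|t 0 0| + `|t 1 0|)); first ring.
by rewrite !sgnst_mul; ring.
Qed.

Lemma d1_t (t : vec R) : dot (d1vec t) t = 0.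
Proof. exact: dot_cross_r. Qed.

Lemma d1_d2 (t : vec R) : dot (d1vec t) (d2vec t) = 0.
Proof. exact: dot_cross_l. Qed.

Lemma d2_neq0 (t : vec R) : t != 0 -> d2vec t != 0.
Proof.
move=> ht; apply/negP => /eqP h.
have h0 := congr1 (fun x : vec R => x 0 0) h; have h2 := congr1 (fun x : vec R => x 2 0) h.
move: h0 h2; rewrite /d2vec !mxE /= => h0 h2.
have : t 2 0 = 0.
  apply/eqP; move: h0 => /eqP; rewrite mulf_eq0 (negbTE (sgnst_neq0 _)) /=.
  by rewrite normr_eq0.
move=> t2; move: h2; rewrite t2 /sgnst lexx !mulN1r -opprD => /eqP.
rewrite oppr_eq0 => /eqP hs.
have n0 := normr_ge0 (t 0 0); have n1 := normr_ge0 (t 1 0).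
have a0 : `|t 0 0| = 0 by lra.
have a1 : `|t 1 0| = 0 by lra.
move/eqP: a0; move/eqP: a1; rewrite !normr_eq0 => /eqP a1 /eqP a0.
by move/negP: ht; apply; apply/eqP; apply: vecP3; rewrite ?a0 ?a1 ?t2 mxE.
Qed.

Lemma d1_neq0 (t : vec R) : t != 0 -> d1vec t != 0.
Proof.
move=> ht; apply/negP => /eqP h.
have := lagrange (d2vec t) t; rewrite -/(d1vec t) h dot0l d2_t expr0n /= subr0 => /eqP.
by rewrite eq_sym mulf_eq0 !(negbTE (dot_neq0 _)) // d2_neq0.
Qed.

Lemma frame_indep (a b c : vec R) (x y z : R) :
  a != 0 -> b != 0 -> c != 0 -> dot a b = 0 -> dot a c = 0 -> dot b c = 0 ->
  x *: a + y *: b + z *: c = 0 -> [/\ x = 0, y = 0 & z = 0].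
Proof.
move=> ha hb hc hab hac hbc h.
have e u := congr1 (fun v => dot v u) h.
have := e a; have := e b; have := e c.
rewrite !dotDl !dotZl dot0l !(dotC b a) !(dotC c a) !(dotC c b) hab hac hbc !mulr0 !addr0 !add0r.
move=> /eqP hz /eqP hy /eqP hx.
move: hz hy hx; rewrite !dot0l !mulf_eq0 (negbTE (dot_neq0 ha)) (negbTE (dot_neq0 hb)) (negbTE (dot_neq0 hc)) !orbF.
by move=> /eqP -> /eqP -> /eqP ->.
Qed.

End Vec.

Section Geo.
Variable R : realFieldType.
Variable J : mat R.
Hypothesis HJ : J \in unitmx.
Local Notation K := (JmT J).

Lemma K_unit : K \in unitmx.
Proof. by rewrite /JmT unitmx_tr unitmx_inv. Qed.

Lemma dot_KJ u v : dot (K *m u) (J *m v) = dot u v.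
Proof. by rewrite !dotE /JmT !trmx_mul trmxK mulmxA -(mulmxA _ (invmx J)) mulVmx // mulmx1. Qed.

Lemma detJ_neq0 : \det J != 0.
Proof. by rewrite -unitfE -unitmxE. Qed.

Lemma kvecE k j : edge_in_face j k -> kvec J k j = K *m ksel R k j.
Proof.
move=> h; rewrite /kvec /nvec /ksel crossZl scaler_eq0 (negbTE detJ_neq0) /=.
rewrite cross_unit ?K_unit // kselP //.
by case: (bad k j).
Qed.

Lemma kvec_t k j : dot (kvec J k j) (tvec J j) = 0.
Proof.
rewrite /kvec /tvec; case: ifP => _; rewrite dot_KJ dotC.
  by case: (tau_kappa R j).
by case: (tau_kappa R j).
Qed.

Lemma nvec_t k j : edge_in_face j k -> dot (nvec J k) (tvec J j) = 0.
Proof. by move=> h; rewrite /nvec /tvec dotZl dot_KJ nu_tau // mulr0. Qed.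

Lemma tvec_neq0 j : tvec J j != 0.
Proof.
apply/negP => /eqP h; move: (tau_neq0 R j); rewrite -(mul1mx (tau R j)) -(mulVmx HJ).
by rewrite -mulmxA -/(tvec J j) h mulmx0 eqxx.
Qed.

Lemma mvecE k j : mvec J k j = dot (nvec J k) (nvec J k) *: kvec J k j
  - dot (nvec J k) (kvec J k j) *: nvec J k.
Proof. by rewrite /mvec /Qmat mulmxBl tensor_mul mul_scalar_mx. Qed.

Lemma frame k j : edge_in_face j k ->
  [/\ tvec J j != 0, nvec J k != 0 & mvec J k j != 0] /\
  [/\ dot (tvec J j) (mvec J k j) = 0, dot (tvec J j) (nvec J k) = 0 &
      dot (mvec J k j) (nvec J k) = 0].
Proof.
move=> h.
have hc : cross (nvec J k) (kvec J k j) != 0.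
  by rewrite /nvec kvecE // crossZl scaler_eq0 (negbTE detJ_neq0) /= cross_unit ?K_unit // cross_ksel.
have hn : nvec J k != 0.
  by apply: contraNneq hc => ->; rewrite /cross !mxE; apply/eqP; apply: vecP3; rewrite !mxE /= !mul0r subrr.
split; split => //.
- exact: tvec_neq0.
- apply: contraNneq hc => hm.
  have hz : cross (nvec J k) 0 = 0 by apply: vecP3; rewrite /cross !mxE /= !mulr0 subrr.
  have := congr1 (cross (nvec J k)) hm; rewrite mvecE cross_comb hz => /eqP.
  by rewrite scaler_eq0 (negbTE (dot_neq0 hn)).
- have htn := nvec_t h; have hkt := kvec_t k j; rewrite mvecE.
  move: (nvec J k) (kvec J k j) htn hkt => n kk htn hkt.
  by rewrite dotBr !dotZr !(dotC (tvec J j)) htn hkt !mulr0 subrr.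
- by rewrite dotC nvec_t.
- rewrite mvecE; move: (nvec J k) (kvec J k j) => n kk.
  by rewrite dotBl !dotZl (dotC kk) mulrC subrr.
Qed.

End Geo.

Section Face.
Variable R : realFieldType.
Implicit Types t m n : vec R.

Definition fmat t m n (r : 'I_5) : mat R :=
  match (r : nat) with
  | 0 => tensor t m | 1 => tensor m t
  | 2 => tensor t t - tensor m m
  | 3 => tensor n t | _ => tensor n m end.
Definition fnmat t m n (r : 'I_3) : mat R :=
  match (r : nat) with 0 => tensor t n | 1 => tensor m n | _ => tensor n n end.

Lemma face_indep t m n (g : 'I_5 -> R) (d : 'I_3 -> R) (mu : R) :
  t != 0 -> m != 0 -> n != 0 -> dot t m = 0 -> dot t n = 0 -> dot m n = 0 ->
  \sum_(r < 5) g r *: fmat t m n r + \sum_(r < 3) d r *: fnmat t m n r = mu *: 1%:M ->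
  (forall r, g r = 0) /\ (forall r, d r = 0).
Proof.
move=> ht hm hn htm htn hmn H.
have hmt : dot m t = 0 by rewrite dotC.
have hnt : dot n t = 0 by rewrite dotC.
have hnm : dot n m = 0 by rewrite dotC.
have e u w := congr1 (fun Z => dot u (Z *m w)) H.
move: H e; rewrite !big_ord_recl !big_ord0 /fmat /fnmat /= => _ e.
have T0 := dot_gt0 ht; have M0 := dot_gt0 hm; have N0 := dot_gt0 hn.
have hmul (x a : R) : 0 < a -> x * a = 0 -> x = 0.
  by move=> a0 /eqP; rewrite mulf_eq0 (gt_eqF a0) orbF => /eqP.
set T := dot t t in T0 e *; set M := dot m m in M0 e *; set N := dot n n in N0 e *.
have bil u w : dot u ((
  (g ord0 *: tensor t m + (g (lift ord0 ord0) *: tensor m t +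
   (g (lift ord0 (lift ord0 ord0)) *: (tensor t t - tensor m m) +
    (g (lift ord0 (lift ord0 (lift ord0 ord0))) *: tensor n t +
     (g (lift ord0 (lift ord0 (lift ord0 (lift ord0 ord0)))) *: tensor n m + 0))))) +
  (d ord0 *: tensor t n + (d (lift ord0 ord0) *: tensor m n +
    (d (lift ord0 (lift ord0 ord0)) *: tensor n n + 0)))) *m w) =
  g ord0 * (dot u t * dot m w) + g (lift ord0 ord0) * (dot u m * dot t w)
  + g (lift ord0 (lift ord0 ord0)) * (dot u t * dot t w - dot u m * dot m w)
  + g (lift ord0 (lift ord0 (lift ord0 ord0))) * (dot u n * dot t w)
  + g (lift ord0 (lift ord0 (lift ord0 (lift ord0 ord0)))) * (dot u n * dot m w)
  + d ord0 * (dot u t * dot n w) + d (lift ord0 ord0) * (dot u m * dot n w)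
  + d (lift ord0 (lift ord0 ord0)) * (dot u n * dot n w).
  rewrite !mulmxDl -!scalemxAl mulmxBl !tensor_mul mul0mx !dotDr !dotZr dotBr !dotZr dot0r.
  ring.
have rhs u w : dot u (mu *: 1%:M *m w) = mu * dot u w.
  by rewrite -scalemxAl mul1mx dotZr.
have E u w := etrans (esym (bil u w)) (etrans (e u w) (rhs u w)).
have := E t m; have := E m t; have := E t t; have := E m m; have := E n t; have := E n m;
have := E t n; have := E m n; have := E n n.
rewrite /T /M /N in T0 M0 N0 *.
rewrite ?htm ?htn ?hmn ?hmt ?hnt ?hnm; rewrite -/T -/M -/N.
rewrite !(mul0r, mulr0, oppr0, addr0, add0r, subr0, sub0r).
move=> enn emn etn enm ent emm ett emt etm.
have TM0 : 0 < T * M by rewrite mulr_gt0.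
have g2 : g (lift ord0 (lift ord0 ord0)) = 0.
  apply: (hmul _ (T * M * (T + M))); first by rewrite !mulr_gt0 ?addr_gt0.
  transitivity (g (lift ord0 (lift ord0 ord0)) * (T * T) * M
     - (g (lift ord0 (lift ord0 ord0)) * - (M * M)) * T); first ring.
  by rewrite ett emm; ring.
have mu0 : mu = 0 by apply: (hmul _ T) => //; rewrite -ett g2 mul0r.
rewrite mu0 mul0r in enn.
have P (a b : R) : 0 < a -> 0 < b -> 0 < a * b by move=> *; rewrite mulr_gt0.
have g0 := hmul _ _ (P _ _ T0 M0) etm.
have g1 := hmul _ _ (P _ _ M0 T0) emt.
have g3 := hmul _ _ (P _ _ N0 T0) ent.
have g4 := hmul _ _ (P _ _ N0 M0) enm.
have d0 := hmul _ _ (P _ _ T0 N0) etn.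
have d1 := hmul _ _ (P _ _ M0 N0) emn.
have d2 := hmul _ _ (P _ _ N0 N0) enn.
split=> -[[|[|[|[|[|//]]]]]] Hr.
all: try (by rewrite (_ : Ordinal Hr = ord0) //; apply: val_inj).
all: try (by rewrite (_ : Ordinal Hr = lift ord0 ord0) //; apply: val_inj).
all: try (by rewrite (_ : Ordinal Hr = lift ord0 (lift ord0 ord0)) //; apply: val_inj).
all: try (by rewrite (_ : Ordinal Hr = lift ord0 (lift ord0 (lift ord0 ord0))) //; apply: val_inj).
all: try (by rewrite (_ : Ordinal Hr = lift ord0 (lift ord0 (lift ord0 (lift ord0 ord0)))) //; apply: val_inj).
Qed.
End Face.

Section Edge.
Variable R : realFieldType.
Variable J : mat R.
Hypothesis HJ : J \in unitmx.

Definition dm (j : 'I_6) (b : bool) : mat R :=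
  let t := tvec J j in tensor (if b then d1vec t else d2vec t) t.

Definition efm (kj : EFidx) (r : 'I_3) : mat R :=
  let k := (val kj).1 in let j := (val kj).2 in
  let t := tvec J j in let kk := kvec J k j in
  let m := mvec J k j in let n := nvec J k in
  match (r : nat) with 0 => tensor t kk | 1 => tensor m kk | _ => tensor n kk end.

Definition efv (kj : EFidx) (r : 'I_3) : vec R :=
  match (r : nat) with 0 => tvec J (val kj).2 | 1 => mvec J (val kj).1 (val kj).2
  | _ => nvec J (val kj).1 end.

Lemma efmE kj r : efm kj r = tensor (efv kj r) (kvec J (val kj).1 (val kj).2).
Proof. by case: r => -[|[|?]] ?. Qed.

Lemma edge_indep j (al : bool -> R) (be : EFidx -> 'I_3 -> R) mu :
  \sum_(b : bool) al b *: dm j b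
  + \sum_(kj : EFidx | (val kj).2 == j) \sum_(r < 3) be kj r *: efm kj r = mu *: 1%:M ->
  (forall b, al b = 0) /\ (forall kj, (val kj).2 = j -> forall r, be kj r = 0).
Proof.
move=> H.
have ht := tvec_neq0 HJ j.
have H1 := congr1 (mulmx^~ (tvec J j)) H; move: H1 => /=.
rewrite mulmxDl !mulmx_suml [X in _ + X = _]big1; last first.
  move=> kj /eqP hj; rewrite mulmx_suml big1 // => r _.
  rewrite -scalemxAl efmE tensor_mul -hj (_ : dot _ _ = 0) ?scale0r ?scaler0 //.
  exact: (kvec_t HJ).
rewrite addr0 big_bool /dm -!scalemxAl !tensor_mul mul1mx => H1.
have {}H1 : al true *: (dot (tvec J j) (tvec J j) *: d1vec (tvec J j))
  + al false *: (dot (tvec J j) (tvec J j) *: d2vec (tvec J j)) = mu *: tvec J j := H1.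
have hd1 := d1_neq0 ht; have hd2 := d2_neq0 ht.
have h1t := d1_t (tvec J j); have h2t := d2_t (tvec J j); have h12 := d1_d2 (tvec J j).
move: H1 h1t h2t h12 hd1 hd2 ht; set t := tvec J j; set d1 := d1vec t; set d2 := d2vec t.
move=> H1 h1t h2t h12 hd1 hd2 ht.
have T0 := dot_gt0 ht.
have hmul (x a : R) : 0 < a -> x * a = 0 -> x = 0.
  by move=> a0 /eqP; rewrite mulf_eq0 (gt_eqF a0) orbF => /eqP.
have mu0 : mu = 0.
  apply: (hmul _ (dot t t)) => //.
  have := congr1 (fun v => dot v t) H1; rewrite /= !dotDl !dotZl h1t h2t !mulr0 addr0 => <-.
  by [].
have alt : al true = 0.
  apply: (hmul _ (dot t t * dot d1 d1)); first by rewrite mulr_gt0 ?dot_gt0.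
  have := congr1 (fun v => dot v d1) H1; rewrite /= !dotDl !dotZl (dotC d2 d1) h12 (dotC t d1) h1t mu0.
  by rewrite !mulr0 addr0.
have alf : al false = 0.
  apply: (hmul _ (dot t t * dot d2 d2)); first by rewrite mulr_gt0 ?dot_gt0.
  have := congr1 (fun v => dot v d2) H1; rewrite /= !dotDl !dotZl h12 (dotC t d2) h2t mu0.
  by rewrite !mulr0 add0r.
have hal : forall b, al b = 0 by case.
split => // kj0 hj0 r0.
move: H; rewrite big1 ?add0r ?mu0 ?scale0r; last by move=> b _; rewrite hal scale0r.
move=> H2.
have hin0 : edge_in_face j (val kj0).1 by rewrite -hj0; exact: (valP kj0).
have [om1 om2] := omegaP R hin0.
have H3 := congr1 (mulmx^~ (J *m omega R (val kj0).1 j)) H2; move: H3.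
rewrite /= mul0mx mulmx_suml (bigD1 kj0) ?hj0 ?eqxx //= [X in _ + X]big1; last first.
  move=> kj /andP[/eqP hj hne]; rewrite mulmx_suml big1 // => r _.
  rewrite -scalemxAl efmE tensor_mul kvecE //; last exact: (valP kj).
  rewrite dot_KJ //.
  have hin : edge_in_face j (val kj).1 by rewrite -hj; exact: (valP kj).
  rewrite (_ : dot _ _ = 0) ?scale0r ?scaler0 //.
  have -> : (val kj).2 = j := hj.
  apply: om2 => //.
  apply: contra hne => /eqP he; apply/eqP/val_inj.
  have e2 : (val kj).2 = (val kj0).2 by apply: (etrans hj); apply: esym; exact: hj0.
  by move: he e2; case: (val kj) => a b; case: (val kj0) => c d /= -> ->.
rewrite addr0 mulmx_suml.
under eq_bigr => r _ do rewrite -scalemxAl efmE tensor_mul kvecE ?dot_KJ ?hj0 // ?(valP kj0).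
have om1' : dot (ksel R (sval kj0).1 j) (omega R (sval kj0).1 j) != 0 := om1.
under eq_bigr => r _ do rewrite scalerA mulrC -scalerA.
rewrite -scaler_sumr => /eqP; rewrite scaler_eq0 (negbTE om1') /= sum3 /efv /= => /eqP H4.
have [[f1 f2 f3] [f4 f5 f6]] := frame HJ (valP kj0).
have [z0 z1 z2] := frame_indep f1 f3 f2 f4 f5 f6 H4.
by case: (ord3 r0) => [->|[->|->]].
Qed.
End Edge.

Lemma minJ_in (k : 'I_4) : edge_in_face (minJ k) k.
Proof.
have [j hj] : exists j : 'I_6, edge_in_face j k.
  case: k => -[|[|[|[|//]]]] Hk.
  - exists (@Ordinal 6 0 isT); rewrite /edge_in_face /opp_v /edge_v /= -!val_eqE /= !inordK //.
  - exists (@Ordinal 6 0 isT); rewrite /edge_in_face /opp_v /edge_v /= -!val_eqE /= !inordK //.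
  - exists (@Ordinal 6 1 isT); rewrite /edge_in_face /opp_v /edge_v /= -!val_eqE /= !inordK //.
  - exists (@Ordinal 6 3 isT); rewrite /edge_in_face /opp_v /edge_v /= -!val_eqE /= !inordK //.
rewrite /minJ; set s := [seq _ <- _ | _].
have hs : (0 < size s)%N.
  by rewrite size_filter -has_count; apply/hasP; exists j; rewrite ?mem_enum.
by have := mem_nth ord0 hs; rewrite mem_filter => /andP[].
Qed.

Section Gen.
Variable R : realFieldType.

Lemma polyfun_lin (q : nat) (I : finType) (f : I -> vec R -> R) (c : I -> R) :
  (forall i, polyfun q (f i)) -> polyfun q (fun y => \sum_i c i * f i y).
Proof.
move=> h; have [d hd] := fin_all_exists h.
exists (fun al => \sum_i c i * d i al) => y.
under eq_bigr => i _ do rewrite hd mulr_sumr.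
rewrite exchange_big /=; apply: eq_bigr => al _.
by rewrite mulr_suml; apply: eq_bigr => i _; rewrite mulrA.
Qed.

Lemma scalar_coeffs (S : vec R -> Prop) (I : finType) (f : I -> vec R -> R)
  (M : I -> mat R) (psi : vec R -> R) :
  sindep_on S f -> (forall y, S y -> \sum_i f i y *: M i + psi y *: 1%:M = 0) ->
  forall i, M i = M i 0 0 *: 1%:M.
Proof.
move=> hind h i; apply/matrixP => r s.
have e (r' s' : 'I_3) y : S y -> \sum_i f i y * M i r' s' + psi y * (r' == s')%:R = 0.
  move=> Sy; have := congr1 (fun Z : mat R => Z r' s') (h y Sy).
  by rewrite !mxE summxE; under eq_bigr => ? _ do rewrite mxE.
suff hz : forall y, S y -> \sum_i (M i r s - (r == s)%:R * M i 0 0) * f i y = 0.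
  have := hind (fun i => M i r s - (r == s)%:R * M i 0 0) hz i.
  by rewrite !mxE => /eqP; rewrite subr_eq0 mulrC => /eqP.
move=> y Sy.
have := e r s y Sy; have := e 0 0 y Sy; rewrite eqxx mulr1 => h0 h1.
under eq_bigr => ? _ do rewrite mulrBl -mulrA.
rewrite sumrB -mulr_sumr.
have s1 : \sum_i M i r s * f i y = - (psi y * (r == s)%:R).
  apply/eqP; rewrite -addr_eq0; apply/eqP.
  by under eq_bigr => ? _ do rewrite mulrC.
have s0 : \sum_i M i 0 0 * f i y = - psi y.
  apply/eqP; rewrite -addr_eq0; apply/eqP.
  by under eq_bigr => ? _ do rewrite mulrC.
by rewrite s1 s0 mulrN opprK mulrC addrC subrr.
Qed.

End Gen.

Lemma regroup (V : nmodType) (I K : finType) (g : K -> I) (H : K -> I -> V) :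
  \sum_(i : I) \sum_(k | g k == i) H k i = \sum_k H k (g k).
Proof.
rewrite (exchange_big_dep predT) //=; apply: eq_bigr => k _.
by rewrite (big_pred1 (g k)) // => i; rewrite /= eq_sym.
Qed.

Section Main.
Variables (R : realFieldType) (p : nat) (a : vec R) (J : mat R)
  (E : forall q, 'I_6 -> 'I_q.-1 -> vec R -> R)
  (F : forall q, 'I_4 -> 'I_(dimF q) -> vec R -> R)
  (C : forall q, 'I_(dimC q) -> vec R -> R)
  (B : 'I_36 -> vec R -> mat R) (S : 'I_8 -> mat R) (c : Idx p -> R).

Definition cB i : R := c (inl (inl (inl (inl (inl (inl i)))))).
Definition cE j (i : 'I_p.-1) b : R := c (inl (inl (inl (inl (inl (inr (j, i, b))))))).
Definition cEF kj (i : 'I_p.-1) r : R := c (inl (inl (inl (inl (inr (kj, i, r)))))).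
Definition cFc k (i : 'I_(dimF p)) r : R := c (inl (inl (inl (inr (k, i, r))))).
Definition cE1 j (i : 'I_p) : R := c (inl (inl (inr (inl (inl (j, i)))))).
Definition cF1 k (i : 'I_(dimF p.+1)) : R := c (inl (inl (inr (inl (inr (k, i)))))).
Definition cC1 (i : 'I_(dimC p.+1)) : R := c (inl (inl (inr (inr i)))).
Definition cFN k (i : 'I_(dimF p)) r : R := c (inl (inr (k, i, r))).
Definition cCS (i : 'I_(dimC p)) s : R := c (inr (i, s)).

Definition ME j (i : 'I_p.-1) : mat R :=
  \sum_(b : bool) cE j i b *: dm J j b
  + \sum_(kj : EFidx | (val kj).2 == j) \sum_(r < 3) cEF kj i r *: efm J kj r.
Definition tF k := tvec J (minJ k).
Definition mF k := mvec J k (minJ k).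
Definition nF k := nvec J k.
Definition MF k (i : 'I_(dimF p)) : mat R :=
  \sum_(r < 5) cFc k i r *: fmat (tF k) (mF k) (nF k) r
  + \sum_(r < 3) cFN k i r *: fnmat (tF k) (mF k) (nF k) r.
Definition MC (i : 'I_(dimC p)) : mat R := \sum_s cCS i s *: S s.

Variable A : 'I_4 -> mat R.
Hypothesis HA : forall y, inT a J y -> \sum_i cB i *: B i y = \sum_v lam a J v y *: A v.

Definition Mall (h : allIdx p) : mat R :=
  match h with
  | inl (inl (inl v)) => A v
  | inl (inl (inr (j, i))) => ME j i
  | inl (inr (k, i)) => MF k i
  | inr i => MC i
  end.

Definition cpsi (h : allIdx p.+1) : R :=
  match h with
  | inl (inl (inl v)) => 0
  | inl (inl (inr (j, i))) => cE1 j i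
  | inl (inr (k, i)) => cF1 k i
  | inr i => cC1 i
  end.

Definition psi y := \sum_h cpsi h * allbasis R a J E F C p.+1 h y.

Variable y : vec R.

Lemma L_Ed :
  \sum_(x : 'I_6 * 'I_p.-1) allbasis R a J E F C p (inl (inl (inr x))) y *: Mall (inl (inl (inr x)))
  = \sum_(x : 'I_6 * 'I_p.-1 * bool) cE x.1.1 x.1.2 x.2 *: (@E p x.1.1 x.1.2 y *: dm J x.1.1 x.2)
  + \sum_(x : EFidx * 'I_p.-1 * 'I_3) cEF x.1.1 x.1.2 x.2 *: (@E p (val x.1.1).2 x.1.2 y *: efm J x.1.1 x.2).
Proof.
rewrite (eq_bigr (fun x => \sum_b cE x.1 x.2 b *: (@E p x.1 x.2 y *: dm J x.1 b)
   + \sum_(kj : EFidx | (val kj).2 == x.1) \sum_(r < 3) cEF kj x.2 r *: (@E p (val kj).2 x.2 y *: efm J kj r))); last first.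
  move=> [j i] _ /=; rewrite /ME scalerDr !scaler_sumr; congr (_ + _).
    by apply: eq_bigr => b _; rewrite !scalerA mulrC.
  apply: eq_bigr => kj /eqP hj; rewrite scaler_sumr; apply: eq_bigr => r _.
  by rewrite !scalerA mulrC hj.
rewrite big_split /=; congr (_ + _); first by rewrite pair_bigA.
rewrite -(pair_bigA _ (fun j i => \sum_(kj : EFidx | (val kj).2 == j) \sum_(r < 3)
   cEF kj i r *: (@E p (val kj).2 i y *: efm J kj r))) /=.
rewrite exchange_big /=.
under eq_bigr => i _ do rewrite (regroup (fun kj : EFidx => (val kj).2)
   (fun kj _ => \sum_(r < 3) cEF kj i r *: (@E p (val kj).2 i y *: efm J kj r))).
by rewrite exchange_big /= !pair_bigA.
Qed.

Definition X1 := \sum_i cB i *: B i y.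
Definition X2 := \sum_(x : 'I_6 * 'I_p.-1 * bool) cE x.1.1 x.1.2 x.2 *: (@E p x.1.1 x.1.2 y *: dm J x.1.1 x.2).
Definition X3 := \sum_(x : EFidx * 'I_p.-1 * 'I_3) cEF x.1.1 x.1.2 x.2 *: (@E p (val x.1.1).2 x.1.2 y *: efm J x.1.1 x.2).
Definition X4 := \sum_(x : 'I_4 * 'I_(dimF p) * 'I_5) cFc x.1.1 x.1.2 x.2 *:
   (@F p x.1.1 x.1.2 y *: fmat (tF x.1.1) (mF x.1.1) (nF x.1.1) x.2).
Definition X5a := \sum_(x : 'I_6 * 'I_p) cE1 x.1 x.2 *: (@E p.+1 x.1 x.2 y *: (1%:M : mat R)).
Definition X5b := \sum_(x : 'I_4 * 'I_(dimF p.+1)) cF1 x.1 x.2 *: (@F p.+1 x.1 x.2 y *: (1%:M : mat R)).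
Definition X5c := \sum_i cC1 i *: (@C p.+1 i y *: (1%:M : mat R)).
Definition X6 := \sum_(x : 'I_4 * 'I_(dimF p) * 'I_3) cFN x.1.1 x.1.2 x.2 *:
   (@F p x.1.1 x.1.2 y *: fnmat (tF x.1.1) (mF x.1.1) (nF x.1.1) x.2).
Definition X7 := \sum_(x : 'I_(dimC p) * 'I_8) cCS x.1 x.2 *: (@C p x.1 y *: S x.2).

Lemma L_Fa :
  \sum_(x : 'I_4 * 'I_(dimF p)) allbasis R a J E F C p (inl (inr x)) y *: Mall (inl (inr x))
  = X4 + X6.
Proof.
rewrite (eq_bigr (fun x => \sum_(r < 5) cFc x.1 x.2 r *: (@F p x.1 x.2 y *: fmat (tF x.1) (mF x.1) (nF x.1) r)
   + \sum_(r < 3) cFN x.1 x.2 r *: (@F p x.1 x.2 y *: fnmat (tF x.1) (mF x.1) (nF x.1) r))); last first.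
  move=> [k i] _ /=; rewrite /MF scalerDr !scaler_sumr; congr (_ + _).
    by apply: eq_bigr => r _; rewrite !scalerA mulrC.
  by apply: eq_bigr => r _; rewrite !scalerA mulrC.
by rewrite big_split /= !pair_bigA.
Qed.

Lemma L_Cl : \sum_i allbasis R a J E F C p (inr i) y *: Mall (inr i) = X7.
Proof.
transitivity (\sum_(i < dimC p) \sum_(s < 8) cCS i s *: (@C p i y *: S s)); last by rewrite pair_bigA.
apply: eq_bigr => i _.
by rewrite /MC scaler_sumr; apply: eq_bigr => s _; rewrite !scalerA mulrC.
Qed.

Lemma L_psi : psi y *: 1%:M = (X5a + X5b) + X5c.
Proof.
rewrite /psi !big_sumType /= big1 ?add0r; last by move=> v _; rewrite mul0r.
rewrite !scalerDl !scaler_suml /X5a /X5b /X5c.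
congr (_ + _ + _).
- by apply: eq_bigr => -[j i] _; rewrite scalerA.
- by apply: eq_bigr => -[k i] _; rewrite scalerA.
- by apply: eq_bigr => i _; rewrite scalerA.
Qed.

Definition fm (x : Idx p) := c x *: fam R a J B S E F C p x y.

Lemma DEC : \sum_x fm x =
  (((((X1 + X2) + X3) + X4) + ((X5a + X5b) + X5c)) + X6) + X7.
Proof.
have h2 : X2 = \sum_x fm (inl (inl (inl (inl (inl (inr x)))))) by apply: eq_bigr => -[[j i] b] _.
have h3 : X3 = \sum_x fm (inl (inl (inl (inl (inr x))))) by apply: eq_bigr => -[[kj i] r] _.
have h4 : X4 = \sum_x fm (inl (inl (inl (inr x)))) by apply: eq_bigr => -[[k i] r] _.
have h5a : X5a = \sum_x fm (inl (inl (inr (inl (inl x))))) by apply: eq_bigr => -[j i] _.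
have h5b : X5b = \sum_x fm (inl (inl (inr (inl (inr x))))) by apply: eq_bigr => -[k i] _.
have h5c : X5c = \sum_x fm (inl (inl (inr (inr x)))) by apply: eq_bigr => i _.
have h6 : X6 = \sum_x fm (inl (inr x)) by apply: eq_bigr => -[[k i] r] _.
have h7 : X7 = \sum_x fm (inr x) by apply: eq_bigr => -[i s] _.
have h1 : X1 = \sum_x fm (inl (inl (inl (inl (inl (inl x)))))) by apply: eq_bigr => i _.
rewrite h1 h2 h3 h4 h5a h5b h5c h6 h7.
by rewrite !big_sumType.
Qed.
Definition gm (h : allIdx p) := allbasis R a J E F C p h y *: Mall h.

Lemma RHSdec : \sum_h gm h =
  \sum_v lam a J v y *: A v + (X2 + X3) + (X4 + X6) + X7.
Proof.
rewrite -L_Ed -L_Fa -L_Cl.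
have e1 : \sum_v lam a J v y *: A v = \sum_v gm (inl (inl (inl v))) by [].
have e2 : \sum_(x : 'I_6 * 'I_p.-1) allbasis R a J E F C p (inl (inl (inr x))) y *: Mall (inl (inl (inr x)))
   = \sum_x gm (inl (inl (inr x))) by [].
have e3 : \sum_(x : 'I_4 * 'I_(dimF p)) allbasis R a J E F C p (inl (inr x)) y *: Mall (inl (inr x))
   = \sum_x gm (inl (inr x)) by [].
have e4 : \sum_i allbasis R a J E F C p (inr i) y *: Mall (inr i) = \sum_x gm (inr x) by [].
by rewrite e1 e2 e3 e4 !big_sumType.
Qed.

Lemma EQ : inT a J y -> \sum_x c x *: fam R a J B S E F C p x y =
  \sum_h allbasis R a J E F C p h y *: Mall h + psi y *: 1%:M.
Proof.
move=> Ty.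
have := DEC; rewrite /fm => ->.
have := RHSdec; rewrite /gm => ->.
rewrite L_psi -(HA Ty) -/X1.
move: X1 X2 X3 X4 X5a X5b X5c X6 X7 => x1 x2 x3 x4 x5 x6 x7 x8 x9.
set x5' := x5 + x6 + x7.
rewrite !addrA -!addrA; congr (_ + (_ + (_ + _))); congr (_ + _).
by rewrite [RHS]addrA [RHS]addrC !addrA.
Qed.
End Main.

Section Main2.
Variables (R : realFieldType) (p : nat) (a : vec R) (J : mat R)
  (E : forall q, 'I_6 -> 'I_q.-1 -> vec R -> R)
  (F : forall q, 'I_4 -> 'I_(dimF q) -> vec R -> R)
  (C : forall q, 'I_(dimC q) -> vec R -> R)
  (B : 'I_36 -> vec R -> mat R) (S : 'I_8 -> mat R) (c : Idx p -> R).
Variable A : 'I_4 -> mat R.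
Hypothesis HA : forall y, inT a J y -> \sum_i cB c i *: B i y = \sum_v lam a J v y *: A v.
Hypothesis Hp : (2 <= p)%N.
Hypothesis HJ : J \in unitmx.
Hypothesis HP : polytopal_spaces a J E F C.
Hypothesis HB : P1mat_basis a J B.
Hypothesis HS : sl3_basis S.
Hypothesis Hc : forall y, inT a J y -> \sum_x c x *: fam R a J B S E F C p x y = 0.

Local Notation Mall := (Mall J S c A).

Lemma Z y : inT a J y ->
  \sum_h allbasis R a J E F C p h y *: Mall h + psi a J E F C c y *: 1%:M = 0.
Proof. by move=> Ty; rewrite -(EQ E F C S HA Ty) Hc. Qed.

Lemma indp : sindep_on (inT a J) (allbasis R a J E F C p).
Proof. by have [_ _ _ [_ h _]] := HP (ltnW Hp). Qed.

Lemma indp1 : sindep_on (inT a J) (allbasis R a J E F C p.+1).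
Proof. by have [_ _ _ [_ h _]] := HP (isT : (1 <= p.+1)%N). Qed.

Lemma hM h : Mall h = Mall h 0 0 *: 1%:M.
Proof. exact: (scalar_coeffs indp Z). Qed.

Lemma edge0 j i : (forall b, cE c j i b = 0) /\
  (forall kj, (val kj).2 = j -> forall r, cEF c kj i r = 0).
Proof.
have := hM (inl (inl (inr (j, i)))); rewrite /=.
move=> h.
exact: (@edge_indep R J HJ j (cE c j i) (fun kj r => cEF c kj i r) (ME J c j i 0 0) h).
Qed.

Lemma face0 k i : (forall r, cFc c k i r = 0) /\ (forall r, cFN c k i r = 0).
Proof.
have := hM (inl (inr (k, i))); rewrite /= /MF.
have [[f1 f2 f3] [f4 f5 f6]] := frame HJ (minJ_in k).
move=> h.
exact: (@face_indep R _ _ _ (cFc c k i) (cFN c k i) _ f1 f3 f2 f4 f5 f6 h).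
Qed.

Lemma cell0 i s : cCS c i s = 0.
Proof.
have := hM (inr i); rewrite /= /MC => h.
have htr := congr1 mxtrace h.
rewrite raddf_sum /= in htr.
rewrite mxtraceZ mxtrace1 big1 in htr; last first.
  by move=> s' _; have [hs _ _] := HS; rewrite mxtraceZ hs mulr0.
have mu0 : (\sum_s0 cCS c i s0 *: S s0) 0 0 = 0.
  by apply/eqP; move/eqP: htr; rewrite eq_sym mulf_eq0 pnatr_eq0 orbF.
rewrite mu0 scale0r in h.
by have [_ hi _] := HS; exact: (hi (cCS c i) h s).
Qed.


Lemma ME0 j i : ME J c j i = 0.
Proof.
have [h1 h2] := edge0 j i.
rewrite /ME big1 ?add0r; last by move=> b _; rewrite h1 scale0r.
by rewrite big1 // => kj /eqP hj; rewrite big1 // => r _; rewrite h2 // scale0r.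
Qed.

Lemma MF0 k i : MF J c k i = 0.
Proof.
have [h1 h2] := face0 k i.
by rewrite /MF !big1 ?addr0 // => r _; rewrite ?h1 ?h2 scale0r.
Qed.

Lemma MC0 i : MC S c i = 0.
Proof. by rewrite /MC big1 // => s _; rewrite cell0 scale0r. Qed.

Definition c2 (h : allIdx p.+1) : R :=
  match h with inl (inl (inl v)) => A v 0 0 | _ => cpsi c h end.

Lemma e00 y : inT a J y -> \sum_h c2 h * allbasis R a J E F C p.+1 h y = 0.
Proof.
move=> Ty; have H := congr1 (fun Z : mat R => Z 0 0) (Z Ty).
rewrite /= !mxE summxE eqxx mulr1 /psi in H; rewrite -[RHS]H.
under [X in _ = X + _]eq_bigr => h _ do rewrite mxE.
rewrite !big_sumType /=.
rewrite [X in _ = _ + X + _ + _ + _]big1; last by move=> [j i] _; rewrite ME0 mxE mulr0.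
rewrite [X in _ = _ + _ + X + _ + _]big1; last by move=> [k i] _; rewrite MF0 mxE mulr0.
rewrite [X in _ = _ + _ + _ + X + _]big1; last by move=> i _; rewrite MC0 mxE mulr0.
rewrite [X in _ = _ + (X + _ + _ + _)]big1; last by move=> v _; rewrite mul0r.
rewrite !addr0 !add0r !addrA; congr (_ + _ + _ + _).
by apply: eq_bigr => v _; rewrite mulrC.
Qed.


Lemma c2_0 h : c2 h = 0.
Proof. exact: (indp1 e00). Qed.

Lemma A0 v : A v = 0.
Proof.
have := hM (inl (inl (inl v))); rewrite /= => ->.
by have := c2_0 (inl (inl (inl v))); rewrite /= => ->; rewrite scale0r.
Qed.

Lemma cB0 i : cB c i = 0.
Proof.
have [_ hi _] := HB; apply: (hi (cB c)) => y Ty.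
by rewrite HA // big1 // => v _; rewrite A0 scaler0.
Qed.

Lemma all0 x : c x = 0.
Proof.
case: x => [[[[[[i|[[j i] b]]|[[kj i] r]]|[[k i] r]]|[[[j i]|[k i]]|i]]|[[k i] r]]|[i s]].
- exact: cB0.
- exact: ((edge0 j i).1 b).
- exact: ((edge0 (val kj).2 i).2 kj erefl r).
- exact: ((face0 k i).1 r).
- exact: (c2_0 (inl (inl (inr (j, i))))).
- exact: (c2_0 (inl (inr (k, i)))).
- exact: (c2_0 (inr i)).
- exact: ((face0 k i).2 r).
- exact: cell0.
Qed.

End Main2.

Unset Implicit Arguments. Set Strict Implicit.

Theorem mainTheorem3 (R : realFieldType) (p : nat) (a : vec R) (J : mat R)
  (E : forall q, 'I_6 -> 'I_q.-1 -> vec R -> R)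
  (F : forall q, 'I_4 -> 'I_(dimF q) -> vec R -> R)
  (C : forall q, 'I_(dimC q) -> vec R -> R)
  (B : 'I_36 -> vec R -> mat R) (S : 'I_8 -> mat R) :
  (2 <= p)%N ->
  J \in unitmx ->
  polytopal_spaces a J E F C ->
  P1mat_basis a J B ->
  sl3_basis S ->
  mindep_on (inT a J) (fam R a J B S E F C p).
Proof.
move=> Hp HJ HP HB HS c Hc.
have [_ _ _ [_ _ span1]] := HP 1%N isT.
have [hBpoly _ _] := HB.
have ex : forall rs : 'I_3 * 'I_3, exists al : allIdx 1 -> R, forall y, inT a J y ->
    \sum_i cB c i * B i y rs.1 rs.2 = \sum_h al h * allbasis R a J E F C 1 h y.
  move=> rs; apply: span1; apply: polyfun_lin => i; exact: hBpoly.
have [al hal] := fin_all_exists ex.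
pose A (v : 'I_4) : mat R := \matrix_(r, s) al (r, s) (inl (inl (inl v))).
have dF1 : dimF 1 = 0%N by vm_compute.
have dC1 : dimC 1 = 0%N by vm_compute.
have HA : forall y, inT a J y -> \sum_i cB c i *: B i y = \sum_v lam a J v y *: A v.
  move=> y Ty; apply/matrixP => r s.
  rewrite !summxE; under eq_bigr => i _ do rewrite mxE.
  rewrite (hal (r, s) y Ty) !big_sumType /=.
  rewrite [X in _ + X + _ + _ = _]big1; last by case=> ? [].
  rewrite [X in _ + X + _ = _]big1; last by case=> ? [m hm]; exfalso; move: hm; rewrite dF1.
  rewrite [X in _ + X = _]big1; last by case=> m hm; exfalso; move: hm; rewrite dC1.
  by rewrite !addr0; apply: eq_bigr => v _; rewrite !mxE mulrC.
exact: (all0 HA Hp HJ HP HB HS Hc).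
Qed.
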